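(* Let $0\le\underline{\tau}<\overline{\tau}<\infty$, $\gamma\ge0$, let $f$ be a piecewise continuous probability density supported on $[\underline{\tau},\overline{\tau}]$, and let $\beta:[0,\infty)\to(0,\infty)$ be continuous and decreasing with $\lim_{x\to+\infty}\beta(x)=0$ and such that $x\mapsto x\beta(x)$ is Lipschitz. Assume $\delta>0$. Then every nonnegative continuous solution $x$ of $$x'(t)=-\big(\delta+\beta(x(t))\big)x(t)+2\int_{\underline{\tau}}^{\overline{\tau}}e^{-\gamma\tau}f(\tau)\beta(x(t-\tau))x(t-\tau)\,d\tau,\qquad t\ge\overline{\tau},$$ (with continuous nonnegative initial values on $[0,\overline{\tau}]$) is bounded, i.e. $\limsup_{t\to+\infty}x(t)<+\infty$. *)

(* Defs.v *)
From Stdlib Require Import Reals.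
From Coquelicot Require Import Coquelicot.
Open Scope R_scope.

Definition piecewise_continuous (f : R -> R) (a b : R) : Prop :=
  exists (n : nat) (p : nat -> R),
    p 0%nat = a /\ p n = b /\
    (forall i, (i < n)%nat -> p i < p (S i)) /\
    (forall i, (i < n)%nat ->
       (forall t, p i < t < p (S i) -> continuous f t) /\
       (exists l, filterlim f (at_right (p i)) (locally l)) /\
       (exists r, filterlim f (at_left (p (S i))) (locally r))).

Definition prob_density_on (f : R -> R) (a b : R) : Prop :=
  (forall t, 0 <= f t) /\
  (forall t, t < a \/ b < t -> f t = 0) /\
  RInt f a b = 1.

Definition lipschitz_nonneg (g : R -> R) : Prop :=
  exists L, forall u v, 0 <= u -> 0 <= v -> Rabs (g u - g v) <= L * Rabs (u - v).

(* Main.v *)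
Require Import Defs.
From Stdlib Require Import Reals Lra Lia.
From Coquelicot Require Import Coquelicot.
Open Scope R_scope.

Lemma filt_eps (g : R -> R) (P : R -> Prop) u l :
  filterlim g (within P (locally u)) (locally l) ->
  forall eps, 0 < eps -> exists d, 0 < d /\ forall y, P y -> Rabs (y - u) < d -> Rabs (g y - l) < eps.
Proof.
  intros H eps He.
  destruct (proj1 (filterlim_locally _ _) H (mkposreal eps He)) as [d Hd].
  exists d; split; [apply cond_pos|]. intros y Py Hy. exact (Hd y Hy Py).
Qed.

Lemma eps_cont (g : R -> R) z :
  (forall eps, 0 < eps -> exists d, 0 < d /\ forall y, Rabs (y - z) < d -> Rabs (g y - g z) < eps) ->
  continuous g z.
Proof.
  intros H. apply continuity_pt_filterlim.
  intros eps He. destruct (H eps He) as [d [Hd Hy]].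
  exists d; split; auto. intros y [_ Hy']. apply Hy. exact Hy'.
Qed.

Lemma cont_eps (g : R -> R) z : continuous g z ->
  forall eps, 0 < eps -> exists d, 0 < d /\ forall y, Rabs (y - z) < d -> Rabs (g y - g z) < eps.
Proof.
  intros H eps He. apply continuity_pt_filterlim in H.
  destruct (H eps He) as [d [Hd Hy]]. exists d; split; auto.
  intros y Hy'. destruct (Req_dec y z) as [->|Hne].
  - unfold Rminus; rewrite Rplus_opp_r, Rabs_R0; auto.
  - apply (Hy y). split; [split; [exact I|auto]|]. exact Hy'.
Qed.

Lemma piece_ex a b (f phi : R -> R) (l r : R) : a < b ->
  (forall t, a < t < b -> continuous f t) ->
  filterlim f (at_right a) (locally l) -> filterlim f (at_left b) (locally r) ->
  (forall z, a <= z <= b -> continuous phi z) ->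
  ex_RInt (fun t => f t * phi t) a b.
Proof.
  intros Hab Hc Hl Hr Hphi.
  set (F := fun t => if Rle_dec t a then l else if Rle_dec b t then r else f t).
  assert (HF : forall z, a <= z <= b -> continuous F z).
  { intros z Hz. apply eps_cont. intros eps He.
    destruct (Rtotal_order z a) as [Hza|[Hza|Hza]]; [lra| |].
    - subst z. destruct (filt_eps _ _ _ _ Hl eps He) as [d [Hd Hy]].
      exists (Rmin d (b - a)); split. { apply Rmin_glb_lt; lra. }
      intros y Hya. assert (Hm1 := Rmin_l d (b-a)). assert (Hm2 := Rmin_r d (b-a)).
      unfold F. destruct (Rle_dec a a); [|lra].
      destruct (Rle_dec y a).
      + unfold Rminus; rewrite Rplus_opp_r, Rabs_R0; auto.
      + destruct (Rle_dec b y).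
        * apply Rabs_def2 in Hya. lra.
        * apply Hy; [lra|lra].
    - destruct (Rtotal_order z b) as [Hzb|[Hzb|Hzb]]; [|subst z|lra].
      + destruct (cont_eps f z (Hc z (conj Hza Hzb)) eps He) as [d [Hd Hy]].
        exists (Rmin d (Rmin (z - a) (b - z))); split.
        { apply Rmin_glb_lt; [lra|apply Rmin_glb_lt; lra]. }
        intros y Hyz. assert (Hm1 := Rmin_l d (Rmin (z - a) (b - z))).
        assert (Hm2 := Rmin_r d (Rmin (z - a) (b - z))).
        assert (Hm3 := Rmin_l (z - a) (b - z)). assert (Hm4 := Rmin_r (z - a) (b - z)).
        apply Rabs_def2 in Hyz as Hyz'.
        unfold F. destruct (Rle_dec z a); [lra|]. destruct (Rle_dec b z); [lra|].
        destruct (Rle_dec y a); [lra|]. destruct (Rle_dec b y); [lra|].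
        apply Hy. lra.
      + destruct (filt_eps _ _ _ _ Hr eps He) as [d [Hd Hy]].
        exists (Rmin d (b - a)); split. { apply Rmin_glb_lt; lra. }
        intros y Hya. assert (Hm1 := Rmin_l d (b-a)). assert (Hm2 := Rmin_r d (b-a)).
        apply Rabs_def2 in Hya as Hya'.
        unfold F. destruct (Rle_dec b a); [lra|]. destruct (Rle_dec b b); [|lra].
        destruct (Rle_dec y a); [lra|].
        destruct (Rle_dec b y).
        * unfold Rminus; rewrite Rplus_opp_r, Rabs_R0; auto.
        * apply Hy; [lra|lra]. }
  apply (ex_RInt_ext (fun t => F t * phi t)).
  - intros t Ht. rewrite Rmin_left in Ht by lra. rewrite Rmax_right in Ht by lra.
    unfold F. destruct (Rle_dec t a); [lra|]. destruct (Rle_dec b t); [lra|]. reflexivity.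
  - apply (@ex_RInt_continuous R_CompleteNormedModule). intros z Hz.
    rewrite Rmin_left in Hz by lra. rewrite Rmax_right in Hz by lra.
    exact (continuous_mult F phi z (HF z Hz) (Hphi z Hz)).
Qed.

Lemma pc_ex (f phi : R -> R) a b : piecewise_continuous f a b ->
  (forall z, a <= z <= b -> continuous phi z) ->
  ex_RInt (fun t => f t * phi t) a b.
Proof.
  intros [n [p [H0 [Hn [Hinc Hpc]]]]] Hphi.
  assert (Hmono : forall i j, (i <= j <= n)%nat -> p i <= p j).
  { intros i j [Hij Hjn]. induction Hij; [lra|].
    assert (p m < p (S m)) by (apply Hinc; lia). specialize (IHHij ltac:(lia)). lra. }
  assert (Hk : forall k, (k <= n)%nat -> ex_RInt (fun t => f t * phi t) (p 0%nat) (p k)).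
  { induction k; intros Hkn. { apply ex_RInt_point. }
    apply ex_RInt_Chasles with (p k); [apply IHk; lia|].
    destruct (Hpc k ltac:(lia)) as [Hc [[l Hl] [r Hr]]].
    apply (piece_ex _ _ f phi l r); [apply Hinc; lia|exact Hc|exact Hl|exact Hr|].
    intros z Hz. apply Hphi. split.
    - rewrite <- H0. assert (p 0%nat <= p k) by (apply Hmono; lia). lra.
    - rewrite <- Hn. assert (p (S k) <= p n) by (apply Hmono; lia). lra. }
  rewrite <- H0, <- Hn. apply Hk. lia.
Qed.

Theorem proposition2p2
  (tl tu gamma delta : R) (f beta x : R -> R)
  (Htl : 0 <= tl) (Htlu : tl < tu) (Hgamma : 0 <= gamma)
  (Hf_pc : piecewise_continuous f tl tu)
  (Hf_dens : prob_density_on f tl tu)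
  (Hbeta_pos : forall u, 0 <= u -> 0 < beta u)
  (Hbeta_cont : forall u, 0 <= u ->
      filterlim beta (within (fun s => 0 <= s) (locally u)) (locally (beta u)))
  (Hbeta_decr : forall u v, 0 <= u -> u <= v -> beta v <= beta u)
  (Hbeta_lim : is_lim beta p_infty 0)
  (Hbeta_lip : lipschitz_nonneg (fun u => u * beta u))
  (Hdelta : 0 < delta)
  (Hx_nonneg : forall t, 0 <= t -> 0 <= x t)
  (Hx_cont : forall t, 0 <= t ->
      filterlim x (within (fun s => 0 <= s) (locally t)) (locally (x t)))
  (Hx_ode : forall t, tu < t ->
      is_derive x t
        (- (delta + beta (x t)) * x t
         + 2 * RInt (fun tau => exp (- gamma * tau) * f tau
                                * beta (x (t - tau)) * x (t - tau)) tl tu)) :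
  exists M : R, forall t, 0 <= t -> x t <= M.
Proof.
  destruct Hbeta_lip as [L HL].
  assert (HL' : forall u v, 0 <= u -> 0 <= v ->
     Rabs (u * beta u - v * beta v) <= (Rabs L + 1) * Rabs (u - v)).
  { intros u v Hu Hv. specialize (HL u v Hu Hv).
    assert (L <= Rabs L) by apply Rle_abs. assert (0 <= Rabs (u - v)) by apply Rabs_pos. nra. }
  assert (HLp : 0 < Rabs L + 1) by (assert (0 <= Rabs L) by apply Rabs_pos; lra).
  assert (xcont : forall u eps, 0 <= u -> 0 < eps -> exists d, 0 < d /\
            forall y, 0 <= y -> Rabs (y - u) < d -> Rabs (x y - x u) < eps).
  { intros u eps Hu He. exact (filt_eps _ _ _ _ (Hx_cont u Hu) eps He). }
  set (h := fun s => x (Rmax 0 s)).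
  assert (Hmax : forall y c, Rabs (Rmax 0 y - Rmax 0 c) <= Rabs (y - c)).
  { intros y c. unfold Rmax. destruct (Rle_dec 0 y); destruct (Rle_dec 0 c);
    unfold Rabs; repeat destruct Rcase_abs; lra. }
  assert (hcont : forall c, continuity_pt h c).
  { intro c. apply continuity_pt_filterlim. apply eps_cont. intros eps He.
    destruct (xcont (Rmax 0 c) eps (Rmax_l 0 c) He) as [d [Hd Hy]].
    exists d; split; auto. intros y Hyc. unfold h. apply Hy. apply Rmax_l.
    eapply Rle_lt_trans; [apply Hmax|exact Hyc]. }
  assert (hx : forall c, 0 <= c -> h c = x c).
  { intros c Hc. unfold h. rewrite Rmax_right; auto. }
  destruct (continuity_ab_maj h 0 tu ltac:(lra) (fun c _ => hcont c)) as [Mx [HMx _]].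
  set (M0 := h Mx).
  assert (Hd4 : 0 < delta / 4) by lra.
  destruct (Hbeta_lim (fun y => Rabs (y - 0) < delta / 4)) as [A HA].
  { exists (mkposreal _ Hd4). intros y Hy. exact Hy. }
  set (A' := Rmax 0 A). set (B0 := beta 0).
  assert (HA'0 : 0 <= A') by apply Rmax_l.
  assert (HB0 : 0 < B0) by (apply Hbeta_pos; lra).
  assert (gb : forall u M, 0 <= u <= M -> u * beta u <= A' * B0 + M * (delta / 4)).
  { intros u M [Hu HuM]. assert (Hbu := Hbeta_pos u Hu).
    destruct (Rle_or_lt u A') as [HuA|HuA].
    - assert (beta u <= B0) by (apply Hbeta_decr; lra).
      assert (u * beta u <= A' * beta u) by (apply Rmult_le_compat_r; lra). nra.
    - assert (HAu : A < u) by (assert (A <= A') by apply Rmax_r; lra).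
      specialize (HA u HAu). simpl in HA. apply Rabs_def2 in HA.
      assert (u * beta u <= M * beta u) by (apply Rmult_le_compat_r; lra). nra. }
  set (Mb := Rmax M0 (4 * A' * B0 / delta) + 1).
  exists Mb. intros t Ht.
  destruct (Rle_or_lt (x t) Mb) as [Hle|Hgt]; [exact Hle|exfalso].
  unfold Mb in Hgt.
  destruct (continuity_ab_maj h 0 t Ht (fun c _ => hcont c)) as [ts [Hts Htsr]].
  assert (HM0 : M0 <= Rmax M0 (4 * A' * B0 / delta)) by apply Rmax_l.
  assert (HMA : 4 * A' * B0 / delta <= Rmax M0 (4 * A' * B0 / delta)) by apply Rmax_r.
  assert (Hxts : x t <= x ts).
  { rewrite <- (hx t Ht), <- (hx ts ltac:(lra)). apply Hts. lra. }
  assert (Htstu : tu < ts).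
  { destruct (Rle_or_lt ts tu) as [H|H]; [|exact H].
    assert (x ts <= M0).
    { rewrite <- (hx ts ltac:(lra)). apply HMx. lra. }
    lra. }
  set (Mp := x ts).
  assert (Hbelow : forall s, 0 <= s <= ts -> x s <= Mp).
  { intros s Hs. unfold Mp. rewrite <- (hx s ltac:(lra)), <- (hx ts ltac:(lra)). apply Hts. lra. }
  set (l := - (delta + beta (x ts)) * x ts
         + 2 * RInt (fun tau => exp (- gamma * tau) * f tau
                                * beta (x (ts - tau)) * x (ts - tau)) tl tu).
  assert (Hder := Hx_ode ts Htstu). fold l in Hder.
  assert (Hl0 : 0 <= l).
  { destruct (Rle_or_lt 0 l) as [H|H]; [exact H|exfalso].
    apply is_derive_Reals in Hder.
    assert (He : 0 < - l / 2) by lra.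
    destruct (Hder _ He) as [dd Hdd].
    assert (Hddp := cond_pos dd).
    set (h0 := - Rmin (dd / 2) (ts / 2)).
    assert (Hm1 := Rmin_l (dd / 2) (ts / 2)). assert (Hm2 := Rmin_r (dd / 2) (ts / 2)).
    assert (Hm3 : 0 < Rmin (dd / 2) (ts / 2)) by (apply Rmin_glb_lt; lra).
    assert (Hh0 : h0 < 0) by (unfold h0; lra).
    assert (Hh0a : Rabs h0 < dd) by (rewrite Rabs_left; unfold h0; lra).
    specialize (Hdd h0 ltac:(lra) Hh0a).
    assert (Hq : 0 <= (x (ts + h0) - x ts) / h0).
    { replace ((x (ts + h0) - x ts) / h0) with ((x ts - x (ts + h0)) / (- h0))
        by (field; lra).
      apply Rmult_le_pos.
      - assert (x (ts + h0) <= Mp) by (apply Hbelow; unfold h0; lra). unfold Mp in *. lra.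
      - left. apply Rinv_0_lt_compat. lra. }
    apply Rabs_def2 in Hdd. lra. }
  set (C := A' * B0 + Mp * (delta / 4)).
  set (phi := fun tau => exp (- gamma * tau) * (x (ts - tau) * beta (x (ts - tau)))).
  assert (Hphi : forall z, tl <= z <= tu -> continuous phi z).
  { intros z Hz. unfold phi.
    apply (continuous_mult (fun tau => exp (- gamma * tau))
                          (fun tau => x (ts - tau) * beta (x (ts - tau)))).
    - apply (@ex_derive_continuous R_AbsRing R_NormedModule). auto_derive. auto.
    - apply eps_cont. intros eps He.
      assert (He' : 0 < eps / (Rabs L + 1)) by (apply Rdiv_lt_0_compat; lra).
      destruct (xcont (ts - z) _ ltac:(lra) He') as [d [Hd Hy]].
      exists (Rmin d (ts - tu)); split. { apply Rmin_glb_lt; lra. }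
      intros y Hyz. assert (Hm1 := Rmin_l d (ts - tu)). assert (Hm2 := Rmin_r d (ts - tu)).
      apply Rabs_def2 in Hyz as Hyz'.
      assert (Hq : Rabs (x (ts - y) - x (ts - z)) < eps / (Rabs L + 1)).
      { apply Hy. lra. replace (ts - y - (ts - z)) with (- (y - z)) by ring.
        rewrite Rabs_Ropp. lra. }
      eapply Rle_lt_trans.
      { apply HL'; apply Hx_nonneg; lra. }
      replace eps with ((Rabs L + 1) * (eps / (Rabs L + 1))) by (field; lra).
      apply Rmult_lt_compat_l; lra. }
  assert (Hex1 : ex_RInt (fun tau => exp (- gamma * tau) * f tau
                                * beta (x (ts - tau)) * x (ts - tau)) tl tu).
  { apply (@ex_RInt_ext R_NormedModule (fun t => f t * phi t)).
    - intros y _. unfold phi. assert (E : forall a b c d : R, a*(b*(c*d)) = b*a*d*c) by (intros; ring). apply E.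
    - apply pc_ex; auto. }
  assert (Hexf : ex_RInt f tl tu).
  { apply (@ex_RInt_ext R_NormedModule (fun t => f t * 1)).
    - intros y _. apply Rmult_1_r.
    - apply pc_ex; auto. intros; apply continuous_const. }
  assert (Hex2 : ex_RInt (fun tau => @scal R_AbsRing R_NormedModule C (f tau)) tl tu).
  { apply (@ex_RInt_scal R_NormedModule). exact Hexf. }
  destruct Hf_dens as [Hfpos [_ Hf1]].
  assert (HI : RInt (fun tau => exp (- gamma * tau) * f tau
                                * beta (x (ts - tau)) * x (ts - tau)) tl tu <= C).
  { assert (HC : RInt (fun tau => @scal R_AbsRing R_NormedModule C (f tau)) tl tu = C).
    { etransitivity; [apply (@RInt_scal R_CompleteNormedModule f tl tu C Hexf)|]. rewrite Hf1. change (C * 1 = C). ring. }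
    apply Rle_trans with (RInt (fun tau => @scal R_AbsRing R_NormedModule C (f tau)) tl tu); [|rewrite HC; apply Rle_refl].
    apply RInt_le; [lra|exact Hex1|exact Hex2|].
    intros tau Htau. change (@scal R_AbsRing R_NormedModule C (f tau)) with (C * f tau).
    assert (Hfp := Hfpos tau).
    assert (Hx0 : 0 <= x (ts - tau)) by (apply Hx_nonneg; lra).
    assert (HxM : x (ts - tau) <= Mp) by (apply Hbelow; lra).
    assert (Hg := gb (x (ts - tau)) Mp (conj Hx0 HxM)). fold C in Hg.
    assert (Hb := Hbeta_pos (x (ts - tau)) Hx0).
    assert (He1 : exp (- gamma * tau) <= 1).
    { destruct (Req_dec (- gamma * tau) 0) as [E|E].
      - rewrite E, exp_0. lra.
      - rewrite <- exp_0. left. apply exp_increasing.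
        assert (0 <= gamma * tau) by (apply Rmult_le_pos; lra). lra. }
    assert (He0 := exp_pos (- gamma * tau)).
    assert (Hgx : 0 <= x (ts - tau) * beta (x (ts - tau))) by (apply Rmult_le_pos; lra).
    assert (exp (- gamma * tau) * (x (ts - tau) * beta (x (ts - tau))) <= C).
    { apply Rle_trans with (1 * (x (ts - tau) * beta (x (ts - tau)))).
      - apply Rmult_le_compat_r; lra.
      - lra. }
    assert (f tau * (exp (- gamma * tau) * (x (ts - tau) * beta (x (ts - tau)))) <= f tau * C)
      by (apply Rmult_le_compat_l; lra).
    rewrite (Rmult_comm C).
    replace (exp (- gamma * tau) * f tau * beta (x (ts - tau)) * x (ts - tau))
      with (f tau * (exp (- gamma * tau) * (x (ts - tau) * beta (x (ts - tau))))) by ring.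
    lra. }
  assert (HMp0 : 0 <= Mp) by (apply Hx_nonneg; lra).
  assert (HbMp := Hbeta_pos Mp HMp0).
  assert (Hbig : 4 * A' * B0 < delta * Mp).
  { assert (4 * A' * B0 / delta < Mp) by (unfold Mp; lra).
    apply (Rmult_lt_compat_l delta) in H; [|lra].
    replace (delta * (4 * A' * B0 / delta)) with (4 * A' * B0) in H by (field; lra). lra. }
  unfold l in Hl0. fold Mp in Hl0. unfold C in HI.
  set (I := RInt (fun tau : R => exp (- gamma * tau) * f tau * beta (x (ts - tau)) * x (ts - tau)) tl tu) in *.
  assert (0 <= beta Mp * Mp) by (apply Rmult_le_pos; lra).
  replace (- (delta + beta Mp) * Mp + 2 * I) with (- (delta * Mp) - beta Mp * Mp + 2 * I) in Hl0 by ring.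
  lra.
Qed.
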